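(* Let $n\ge0$, $r,s\ge1$, and suppose the variety $\mathcal V$ has $n+2$ Gumm terms and satisfies $$\alpha(\beta\circ_{2r+1}\gamma)\subseteq\alpha(\gamma\circ\beta)\circ(\alpha\gamma\circ_s\alpha\beta).$$ Then $\mathcal V$ satisfies $\alpha(\beta\circ_{4r+1}\gamma)\subseteq\alpha(\gamma\circ\beta)\circ(\alpha\gamma\circ_{s+4rn}\alpha\beta)$, and more generally, for every $q\ge1$, $$\alpha(\beta\circ_{2^qr+1}\gamma)\subseteq\alpha(\gamma\circ\beta)\circ(\alpha\gamma\circ_{s+(2^{q+1}-4)rn}\alpha\beta).$$
   Context: Here $\alpha,\beta,\gamma$ range over congruences of algebras in $\mathcal V$. $\circ$ is relational composition, juxtaposition is intersection. For relations $X,Y$ and $m\ge1$, $X\circ_m Y$ denotes $X\circ Y\circ X\circ\cdots$ with $m$ factors. A variety has $n+2$ Gumm terms if it has ternary terms $p,j_1,\dots,j_{n+1}$ satisfying: $x=j_i(x,y,x)$ for all $i$; $x=p(x,z,z)$; $p(x,x,z)=j_1(x,x,z)$; $j_i(x,z,z)=j_{i+1}(x,z,z)$ for odd $i\le n$; $j_i(x,x,z)=j_{i+1}(x,x,z)$ for even $i\le n$; $j_{n+1}(x,y,z)=z$. *)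

(* Defs.v *)
From mathcomp Require Import all_boot.
Set Implicit Arguments.
Unset Strict Implicit.
Unset Printing Implicit Defensive.

Record signature := Signature {
  op_sym :> Type;
  arity : op_sym -> nat
}.

Inductive term (S : signature) (X : Type) : Type :=
| Var : X -> term S X
| App : forall f : S, ('I_(arity f) -> term S X) -> term S X.
Arguments Var {S X} _.
Arguments App {S X} _ _.

Record algebra (S : signature) := Algebra {
  carrier :> Type;
  interp : forall f : S, ('I_(arity f) -> carrier) -> carrier
}.

Fixpoint eval (S : signature) (A : algebra S) (X : Type) (v : X -> A)
  (t : term S X) : A :=
  match t with
  | Var x => v x
  | App f args => @interp S A f (fun i => eval v (args i))
  end.

Definition identities (S : signature) := term S nat -> term S nat -> Prop.

Definition in_variety (S : signature) (Sigma : identities S) (A : algebra S) : Prop :=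
  forall t1 t2, Sigma t1 t2 -> forall v : nat -> A, eval v t1 = eval v t2.

Inductive var3 := vx | vy | vz.

Definition ev3 (S : signature) (A : algebra S) (t : term S var3) (x y z : A) : A :=
  @eval S A var3 (fun w => match w with vx => x | vy => y | vz => z end) t.

(* V has n+2 Gumm terms p, j_1, ..., j_{n+1}  (j is indexed by 1..n+1). *)
Definition has_Gumm_terms (S : signature) (Sigma : identities S) (n : nat) : Prop :=
  exists (p : term S var3) (j : nat -> term S var3),
    forall A : algebra S, in_variety Sigma A ->
    forall x y z : A,
      (forall i, 1 <= i <= n.+1 -> ev3 (j i) x y x = x) /\
      ev3 p x z z = x /\
      ev3 p x x z = ev3 (j 1) x x z /\
      (forall i, 1 <= i <= n -> odd i -> ev3 (j i) x z z = ev3 (j i.+1) x z z) /\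
      (forall i, 1 <= i <= n -> ~~ odd i -> ev3 (j i) x x z = ev3 (j i.+1) x x z) /\
      ev3 (j n.+1) x y z = z.

Definition rel_comp (A : Type) (X Y : A -> A -> Prop) : A -> A -> Prop :=
  fun a c => exists b, X a b /\ Y b c.

Definition rel_meet (A : Type) (X Y : A -> A -> Prop) : A -> A -> Prop :=
  fun a b => X a b /\ Y a b.

(* X o_m Y = X o Y o X o ... with m factors (m >= 1); for m = 0 we set it to
   equality (never used). *)
Fixpoint rel_comp_m (A : Type) (m : nat) (X Y : A -> A -> Prop) : A -> A -> Prop :=
  match m with
  | 0 => fun a b => a = b
  | 1 => X
  | m'.+1 => rel_comp X (rel_comp_m m' Y X)
  end.

Definition is_congruence (S : signature) (A : algebra S) (th : A -> A -> Prop) : Prop :=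
  (forall a, th a a) /\
  (forall a b, th a b -> th b a) /\
  (forall a b c, th a b -> th b c -> th a c) /\
  (forall (f : S) (u w : 'I_(arity f) -> A),
      (forall i, th (u i) (w i)) -> th (@interp S A f u) (@interp S A f w)).

Definition satisfies_incl (S : signature) (Sigma : identities S) (m k : nat) : Prop :=
  forall A : algebra S, in_variety Sigma A ->
  forall alpha beta gamma : A -> A -> Prop,
    is_congruence alpha -> is_congruence beta -> is_congruence gamma ->
    forall a b : A,
      rel_meet alpha (rel_comp_m m beta gamma) a b ->
      rel_comp (rel_meet alpha (rel_comp gamma beta))
               (rel_comp_m k (rel_meet alpha gamma) (rel_meet alpha beta)) a b.

(* Main.v *)
From Stdlib Require Import Lia.
Require Import Defs.
From mathcomp Require Import all_boot.
From mathcomp Require Import zify.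
Set Implicit Arguments.
Unset Strict Implicit.
Unset Printing Implicit Defensive.

Definition gchain (A : Type) (R : nat -> A -> A -> Prop) (m : nat) (a b : A) : Prop :=
  exists f : nat -> A, f 0 = a /\ f m = b /\ forall i, i < m -> R i (f i) (f i.+1).

Lemma rcm_gchain (A : Type) (m : nat) (X Y : A -> A -> Prop) (a b : A) :
  rel_comp_m m X Y a b <-> gchain (fun i => if odd i then Y else X) m a b.
Proof.
elim: m X Y a b => [|m IH] X Y a b.
  split => [/= ->|[f [f0 [fm _]]]]; first by exists (fun _ => b).
  by rewrite -f0 -fm.
case: m IH => [|m] IH.
  split => [/= Hab|[f [f0 [f1 Hf]]]].
    by exists (fun i => if i is 0 then a else b); split; [|split] => // -[|i].
  by have := Hf 0 isT; rewrite /= f0 f1.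
have -> : rel_comp_m m.+2 X Y a b = rel_comp X (rel_comp_m m.+1 Y X) a b by [].
split.
  move=> [c [Xac /IH [g [g0 [gm Hg]]]]].
  exists (fun i => if i is i'.+1 then g i' else a); split => //; split => //.
  case=> [_|i Hi] /=; first by rewrite g0.
  have := Hg i Hi. by case: (odd i).
move=> [f [f0 [fm Hf]]].
exists (f 1); split; first by have := Hf 0 isT; rewrite f0.
apply/IH; exists (fun i => f i.+1); split => //; split => //.
move=> i Hi; have := Hf i.+1 Hi; rewrite /=; by case: (odd i).
Qed.

Lemma gchain_cat A (R : nat -> A -> A -> Prop) m m' a c b :
  gchain R m a c -> gchain (fun i => R (m + i)) m' c b -> gchain R (m + m') a b.
Proof.
move=> [f [f0 [fm Hf]]] [g [g0 [gm Hg]]].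
exists (fun i => if i < m then f i else g (i - m)); split; [|split]; cbv beta.
- case: ifP => [_|]; first exact f0.
  move/negbT; rewrite lt0n negbK => /eqP Em.
  by rewrite sub0n g0 -fm Em.
- by rewrite ltnNge leq_addr /= addKn gm.
- move=> i Hi. case: (ltnP i.+1 m) => Hi1.
    rewrite (ltnW Hi1); exact: Hf (ltnW Hi1).
  case: (ltnP i m) => Him.
    have Em : i.+1 = m by lia.
    rewrite -Em subnn g0 -fm -Em; exact: Hf.
  rewrite subSn //.
  have Hlt : i - m < m' by lia.
  have := Hg _ Hlt. by rewrite subnKC.
Qed.

Lemma gchain_pad A (R : nat -> A -> A -> Prop) m m' a b :
  (forall i x, R i x x) -> gchain R m a b -> m <= m' -> gchain R m' a b.
Proof.
move=> Hr [f [f0 [fm Hf]]] Hm.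
exists (fun i => if i < m then f i else b); split; [|split]; cbv beta.
- case: ifP => [_|]; first exact f0.
  move/negbT; rewrite lt0n negbK => /eqP Em. by rewrite -fm Em.
- by rewrite ltnNge Hm.
- move=> i Hi. case: (ltnP i.+1 m) => Hi1.
    rewrite (ltnW Hi1); exact: Hf (ltnW Hi1).
  case: (ltnP i m) => Him.
    have Em : i.+1 = m by lia.
    rewrite -fm -Em; exact: Hf.
  exact: Hr.
Qed.

Lemma gchain_last A (R : nat -> A -> A -> Prop) m a c d :
  gchain R m.+1 a c -> (forall x y z, R m x y -> R m y z -> R m x z) -> R m c d ->
  gchain R m.+1 a d.
Proof.
move=> [f [f0 [fm Hf]]] Ht Hcd.
exists (fun i => if i == m.+1 then d else f i); split; [exact f0|split; first by rewrite eqxx].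
move=> i Hi; cbv beta. rewrite (ltn_eqF Hi). case: (eqVneq i m) => [->|Him].
  rewrite eqxx. apply: (Ht _ (f m.+1)); [exact: Hf|by rewrite fm].
rewrite eqSS (negbTE Him). exact: Hf.
Qed.

Lemma gchain_drop A (R : nat -> A -> A -> Prop) m a b :
  gchain R m.+1 a b -> exists c, R 0 a c /\ gchain (fun i => R i.+1) m c b.
Proof.
move=> [f [f0 [fm Hf]]]. exists (f 1); split; first by rewrite -f0; apply: Hf.
by exists (fun i => f i.+1); split; [|split] => // i Hi; apply: Hf.
Qed.

Lemma gchain_impl A (R R' : nat -> A -> A -> Prop) m a b :
  (forall i x y, i < m -> R i x y -> R' i x y) -> gchain R m a b -> gchain R' m a b.
Proof.
move=> H [f [f0 [fm Hf]]]; exists f; split; [|split] => // i Hi; apply: H => //; exact: Hf.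
Qed.

Lemma gchain_block1 A (R : nat -> A -> A -> Prop) L (v : nat -> A) c :
  0 < L -> (forall m, m.+1 < L -> R m (v m) (v m.+1)) -> R L.-1 (v L.-1) c ->
  gchain R L (v 0) c.
Proof.
move=> HL Hv Hc. exists (fun i => if i < L then v i else c); split; cbv beta.
  by rewrite HL.
split; first by rewrite ltnn.
move=> i Hi. rewrite Hi. case: (ltnP i.+1 L) => Hi1.
  exact: Hv.
have Ei : i.+1 = L by lia.
rewrite -Ei in Hc. exact Hc.
Qed.

Lemma gchain_blocks A (R : nat -> A -> A -> Prop) L n (v : nat -> nat -> A) :
  0 < L ->
  (forall i m, i < n -> m.+1 < L -> R (i * L + m) (v i m) (v i m.+1)) ->
  (forall i, i < n -> R (i * L + L.-1) (v i L.-1) (v i.+1 0)) ->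
  gchain R (n * L) (v 0 0) (v n 0).
Proof.
move=> HL; elim: n => [|n IH] Hin Hb.
  by rewrite mul0n; exists (fun _ => v 0 0); split; [|split].
rewrite mulSnr. apply: gchain_cat.
  apply: IH => [i m Hi Hm|i Hi].
    exact: (Hin i m (leqW Hi) Hm).
  exact: (Hb i (leqW Hi)).
apply: gchain_block1 => // [m Hm|].
  exact: (Hin n m (ltnSn n) Hm).
exact: (Hb n (ltnSn n)).
Qed.

Lemma cong_eval S (A : algebra S) (th : A -> A -> Prop) X (t : term S X) (v w : X -> A) :
  is_congruence th -> (forall x, th (v x) (w x)) -> th (eval v t) (eval w t).
Proof.
move=> [_ [_ [_ Hc]]] Hvw. elim: t => [x|f args IH] /=; [exact: Hvw | exact: Hc].
Qed.

Lemma cong3 S (A : algebra S) (th : A -> A -> Prop) (t : term S var3) (x y z x' y' z' : A) :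
  is_congruence th -> th x x' -> th y y' -> th z z' -> th (ev3 t x y z) (ev3 t x' y' z').
Proof. move=> Hc Hx Hy Hz; by apply: cong_eval => // -[]. Qed.

Lemma odd_comp a b c : a + b = c -> ~~ odd c -> odd a = odd b.
Proof. move=> <-; rewrite oddD; by case: (odd a); case: (odd b). Qed.

Lemma key S (Sigma : identities S) n t k :
  1 <= t -> has_Gumm_terms Sigma n -> satisfies_incl Sigma (2 * t).+1 k ->
  satisfies_incl Sigma (4 * t).+1 (k + 4 * t * n).
Proof.
move=> Ht [p [j HG]] HI A HA al be ga Cal Cbe Cga a b [Hab Hch].
have Gj : forall i (x y : A), 1 <= i <= n.+1 -> ev3 (j i) x y x = x
  by move=> i x y Hi; exact: ((HG A HA x y x).1 i Hi).
have Gp1 : forall x z : A, ev3 p x z z = x by move=> x z; exact: (HG A HA x x z).2.1.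
have Gp2 : forall x z : A, ev3 p x x z = ev3 (j 1) x x z
  by move=> x z; exact: (HG A HA x x z).2.2.1.
have Godd : forall i (x z : A), 1 <= i <= n -> odd i -> ev3 (j i) x z z = ev3 (j i.+1) x z z
  by move=> i x z; exact: (HG A HA x x z).2.2.2.1 i.
have Gev : forall i (x z : A), 1 <= i <= n -> ~~ odd i -> ev3 (j i) x x z = ev3 (j i.+1) x x z
  by move=> i x z; exact: (HG A HA x x z).2.2.2.2.1 i.
have Glast : forall x y z : A, ev3 (j n.+1) x y z = z
  by move=> x y z; exact: (HG A HA x y z).2.2.2.2.2.
have [alR [alS [alT _]]] := Cal.
have [beR [beS [beT _]]] := Cbe.
have [gaR [gaS [gaT _]]] := Cga.
pose Rel := fun i => if odd i then ga else be.
have CRel : forall i, is_congruence (Rel i) by move=> i; rewrite /Rel; case: (odd i).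
have RelS : forall i x y, Rel i x y -> Rel i y x by move=> i; have [_ [H _]] := CRel i.
have RelR : forall i x, Rel i x x by move=> i; have [H _] := CRel i.
have RelE : forall i i', odd i = odd i' -> Rel i = Rel i' by move=> i i' E; rewrite /Rel E.
move/rcm_gchain: Hch => [e [e0 [eM He]]].
have heS : forall i, i < (4 * t).+1 -> Rel i (e i) (e i.+1) := He.
have he0 : be (e 0) (e 1) := He 0 isT.
have he4 : be (e (4 * t)) (e (4 * t).+1).
  by have := He (4 * t) (ltnSn _); rewrite oddM /=.
have HJa : forall i y, 1 <= i <= n.+1 -> al (ev3 (j i) a y b) a.
  move=> i y Hi. apply: (alT _ (ev3 (j i) a y a)); last by rewrite Gj.
  apply: (cong3 _ Cal); [exact: alR | exact: alR | exact: alS].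
have Hal : forall i i' y y', 1 <= i <= n.+1 -> 1 <= i' <= n.+1 ->
    al (ev3 (j i) a y b) (ev3 (j i') a y' b).
  move=> i i' y y' Hi Hi'. apply: (alT _ a); [exact: HJa | apply: alS; exact: HJa].
pose w := ev3 (j 1) a (e 1) b.
have Haw : al a w by apply: alS; apply: HJa.
have Hfold : gchain Rel (2 * t).+1 a w.
  pose v i := if i == 0 then a else ev3 p a (e ((2 * t).+1 - i)) (e (2 * t + i)).
  apply: (gchain_block1 (v := v)) => // [m Hm|].
    case: m Hm => [|m] Hm.
      rewrite /v /=.
      have -> : (2 * t).+1 - 1 = 2 * t by lia.
      rewrite addn1.
      apply: (beT _ (ev3 p a (e (2 * t).+1) (e (2 * t).+1))); first by rewrite Gp1; apply: beR.
      apply: (cong3 _ Cbe); [exact: beR | apply: beS | exact: beR].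
      by have := He (2 * t) (ltac:(lia)); rewrite oddM /=.
    rewrite /v /=.
    have Elo : (2 * t).+1 - m.+1 = ((2 * t).+1 - m.+2).+1 by lia.
    have Ehi : 2 * t + m.+2 = (2 * t + m.+1).+1 by lia.
    rewrite Elo Ehi.
    apply: (cong3 _ (CRel _)); [exact: RelR | apply: RelS | ].
      rewrite (RelE _ ((2 * t).+1 - m.+2)); first by apply: heS; lia.
      apply: (@odd_comp _ _ (2 * t)); first by lia.
      by rewrite oddM.
    rewrite (RelE _ (2 * t + m.+1)); first by apply: heS; lia.
    by rewrite oddD oddM.
  rewrite /v /=.
  have -> : (2 * t == 0) = false by apply/eqP; lia.
  have -> : (2 * t).+1 - 2 * t = 1 by lia.
  have -> : 2 * t + 2 * t = 4 * t by lia.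
  rewrite /Rel oddM /=.
  apply: (beT _ (ev3 p a (e 0) (e (4 * t).+1))).
    apply: (cong3 _ Cbe); [exact: beR | exact: beS | exact: he4].
  rewrite e0 eM Gp2. apply: (cong3 _ Cbe); [exact: beR | rewrite -e0; exact: he0 | exact: beR].
have := HI A HA al be ga Cal Cbe Cga a w (conj Haw (proj2 (rcm_gchain _ _ _ _ _) Hfold)).
move=> [u [Hu Hk]].
exists u; split => //.
pose Q := fun i => if odd i then rel_meet al be else rel_meet al ga.
have Qr : forall i x, Q i x x.
  by move=> i x; rewrite /Q; case: (odd i); split; [exact: alR|exact: beR|exact: alR|exact: gaR].
have Qm : forall m x y, al x y -> Rel m.+1 x y -> Q m x y.
  by move=> m x y Hxy; rewrite /Q /Rel /=; case: (odd m) => /= HR; split.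
pose vv := fun i m => ev3 (j i.+1) a (e (if odd i.+1 then m.+1 else 4 * t - m)) b.
have HJ : gchain Q (4 * t * n) w b.
  have Hbl : gchain Q (n * (4 * t)) (vv 0 0) (vv n 0).
    apply: gchain_blocks => [|i m Hi Hm|i Hi]; first by lia.
      have Pm : odd (i * (4 * t) + m) = odd m by rewrite oddD !oddM /= andbF.
      rewrite /Q Pm -/Q.
      apply: Qm; first by apply: Hal; lia.
      rewrite /vv; cbv beta.
      case: (odd i.+1).
        apply: (cong3 _ (CRel _)); [exact: RelR | apply: heS; lia | exact: RelR].
      have E : 4 * t - m = (4 * t - m.+1).+1 by lia.
      rewrite E.
      apply: (cong3 _ (CRel _)); [exact: RelR | apply: RelS | exact: RelR].
      rewrite (RelE _ (4 * t - m.+1)); first by apply: heS; lia.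
      apply: (@odd_comp _ _ (4 * t)); first by lia.
      by rewrite oddM.
    have Pb : odd (i * (4 * t) + (4 * t).-1) = true.
      rewrite oddD !oddM /= andbF /=.
      have E : (4 * t).-1 = (4 * t - 1) by lia.
      rewrite E oddB; last by lia.
      by rewrite oddM.
    rewrite /Q Pb. split.
      rewrite /vv; cbv beta; apply: Hal; lia.
    rewrite /vv; cbv beta.
    have E4 : ((4 * t).-1).+1 = 4 * t by lia.
    have Hoi2 : odd i.+2 = ~~ odd i.+1 by [].
    rewrite Hoi2.
    case Hoi: (odd i.+1) => /=.
      rewrite E4 subn0.
      apply: (beT _ (ev3 (j i.+1) a (e (4 * t).+1) b)).
        apply: (cong3 _ Cbe); [exact: beR | exact: he4 | exact: beR].
      rewrite eM (Godd i.+1 a b ltac:(lia) Hoi).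
      apply: (cong3 _ Cbe); [exact: beR | rewrite -eM; exact: beS | exact: beR].
    have -> : 4 * t - (4 * t).-1 = 1 by lia.
    apply: (beT _ (ev3 (j i.+1) a (e 0) b)).
      apply: (cong3 _ Cbe); [exact: beR | exact: beS | exact: beR].
    rewrite e0 (Gev i.+1 a b ltac:(lia) ltac:(by rewrite /= Hoi)).
    apply: (cong3 _ Cbe); [exact: beR | rewrite -e0; exact: he0 | exact: beR].
  rewrite /vv Glast [n * _]mulnC in Hbl. exact Hbl.
move/rcm_gchain: Hk => Hk.
apply/rcm_gchain.
case Hok: (odd k).
  case En: (4 * t * n) => [|L].
    rewrite En in HJ. case: HJ => f [f0 [f1 _]].
    have wb : w = b by rewrite -f0 -f1.
    by rewrite addn0 -wb.
  rewrite En in HJ. case: (gchain_drop HJ) => c [Hwc Hcb].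
  case: k HI Hok Hk => [//|k'] HI Hok Hk.
  have Hk'o : odd k' = false by move: Hok => /= /negbTE.
  have Hk' : gchain Q k'.+1 u c.
    apply: (gchain_last (R := Q) Hk).
      rewrite /Q Hk'o => x y z [H1 H2] [H3 H4]; split; [exact: alT H1 H3|exact: gaT H2 H4].
    by rewrite /Q Hk'o.
  apply: (gchain_pad (m := k'.+1 + L)) => //; last by lia.
  apply: gchain_cat Hk' _. apply: gchain_impl Hcb => i x y _.
  by rewrite /Q oddD Hok.
apply: gchain_cat Hk _. apply: gchain_impl HJ => i x y _.
by rewrite /Q oddD Hok.
Qed.

Theorem corollary4p6 (S : signature) (Sigma : identities S) (n r s : nat) :
  1 <= r -> 1 <= s ->
  has_Gumm_terms Sigma n ->
  satisfies_incl Sigma (2 * r).+1 s ->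
  satisfies_incl Sigma (4 * r).+1 (s + 4 * r * n) /\
  (forall q : nat, 1 <= q ->
     satisfies_incl Sigma (2 ^ q * r).+1 (s + (2 ^ q.+1 - 4) * r * n)).
Proof.
move=> Hr Hs HG H2.
have step : forall q, satisfies_incl Sigma (2 ^ q.+1 * r).+1 (s + (2 ^ q.+2 - 4) * r * n).
  elim=> [|q IH].
    by rewrite expn1 /= !mul0n addn0.
  have X1 : 1 <= 2 ^ q by rewrite expn_gt0.
  have E1 : (2 * (2 ^ q * r)).+1 = (2 ^ q.+1 * r).+1 by rewrite expnS mulnA.
  rewrite -E1 in IH.
  have := key (t := 2 ^ q * r) ltac:(rewrite muln_gt0 X1 Hr) HG IH.
  have E2 : 2 ^ q.+2 = 4 * 2 ^ q by rewrite !expnS mulnA.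
  have E3 : 2 ^ q.+3 = 8 * 2 ^ q by rewrite !expnS !mulnA.
  have E4 : (4 * (2 ^ q * r)).+1 = (2 ^ q.+2 * r).+1 by rewrite E2 mulnA.
  have E5 : s + (2 ^ q.+2 - 4) * r * n + 4 * (2 ^ q * r) * n = s + (2 ^ q.+3 - 4) * r * n.
    rewrite E2 E3. move: (2 ^ q) X1 => x Hx. nia.
  by move=> /(_ isT); rewrite E4 E5.
split; first exact: (step 1).
by case=> [//|q] _; exact: step.
Qed.
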